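(* Let $\langle A;\cdot\rangle$ be a semigroup satisfying condition $( * )$. Then $\langle A;\cdot\rangle$ is an Abelian algebra if and only if $\langle A;\cdot\rangle$ is an inflation of a subsemigroup which is a rectangular band of commutative groups, and the product of any two idempotents of $A$ is an idempotent.
   Context: $A\cdot A=\{xy\mid x,y\in A\}$; an idempotent is $e$ with $ee=e$. Condition $( * )$: either ($bcA=bA$ and $Abc=Ac$ for all $b,c\in A$), or the set $A\cdot A$ is finite. A semigroup $\langle T;\cdot\rangle$ is a rectangular band of semigroups $T_{i\lambda}$ if $\{T_{i\lambda}\mid i\in I,\lambda\in\Lambda\}$ is a partition of $T$ into subsemigroups with $T_{i\lambda}\cdot T_{j\mu}\subseteq T_{i\mu}$ for all $i,j\in I$, $\lambda,\mu\in\Lambda$; it is a rectangular band of commutative groups if each $\langle T_{i\lambda};\cdot\rangle$ is a commutative group. A semigroup $\langle A;\cdot\rangle$ is an inflation of a subsemigroup $\langle B;\cdot\rangle$ if there is a partition $\{X_b\mid b\in B\}$ of $A$ with $b\in X_b$ and $x\cdot y=a\cdot b$ for all $a,b\in B$, $x\in X_a$, $y\in X_b$. A polynomial operation of an algebra is an operation obtained from a term by substituting elements of the algebra for some of its variables. An algebra is called Abelian if for every polynomial operation $t(x,y_1,\ldots,y_n)$ and all elements $u,v,c_1,\ldots,c_n,d_1,\ldots,d_n$ of the algebra, $t(u,c_1,\ldots,c_n)=t(u,d_1,\ldots,d_n)$ implies $t(v,c_1,\ldots,c_n)=t(v,d_1,\ldots,d_n)$. *)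

(* Defs.v *)
From Stdlib Require Import List.

Section SG.
Variable A : Type.
Variable mul : A -> A -> A.

Definition cond_star : Prop :=
  (forall b c : A,
     (forall x, (exists a, x = mul (mul b c) a) <-> (exists a, x = mul b a)) /\
     (forall x, (exists a, x = mul (mul a b) c) <-> (exists a, x = mul a c)))
  \/ (exists l : list A, forall x y : A, In (mul x y) l).

(* Terms of the semigroup signature with variables (indexed by nat) and
   constants from A; their evaluations are exactly the polynomial operations. *)
Inductive sterm : Type :=
  | TVar : nat -> sterm
  | TConst : A -> sterm
  | TMul : sterm -> sterm -> sterm.

Fixpoint seval (env : nat -> A) (t : sterm) : A :=
  match t with
  | TVar i => env i
  | TConst a => a
  | TMul t1 t2 => mul (seval env t1) (seval env t2)
  end.

Definition env_cons (u : A) (c : nat -> A) : nat -> A :=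
  fun i => match i with 0 => u | S _ => c i end.

Definition abelian_algebra : Prop :=
  forall (t : sterm) (u v : A) (c d : nat -> A),
    seval (env_cons u c) t = seval (env_cons u d) t ->
    seval (env_cons v c) t = seval (env_cons v d) t.

Definition subsemigroup (B : A -> Prop) : Prop :=
  forall x y, B x -> B y -> B (mul x y).

(* A is an inflation of the subsemigroup B: a partition {X_b | b in B} of A
   (X b x means x \in X_b) with b \in X_b and x y = a b for x in X_a, y in X_b. *)
Definition inflation_of (B : A -> Prop) : Prop :=
  exists X : A -> A -> Prop,
    (forall b x, X b x -> B b) /\
    (forall x, exists b, B b /\ X b x /\ (forall b', B b' -> X b' x -> b' = b)) /\
    (forall b, B b -> X b b) /\
    (forall a b x y, B a -> B b -> X a x -> X b y -> mul x y = mul a b).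

Definition rect_band_comm_groups (T : A -> Prop) : Prop :=
  exists (I L : Type) (P : I -> L -> A -> Prop),
    (forall i l x, P i l x -> T x) /\
    (forall x, T x -> exists i l, P i l x /\
        (forall i' l', P i' l' x -> i' = i /\ l' = l)) /\
    (forall i l, exists x, P i l x) /\
    (forall i l x y, P i l x -> P i l y -> P i l (mul x y)) /\
    (forall i j l m x y, P i l x -> P j m y -> P i m (mul x y)) /\
    (forall i l,
       (forall x y, P i l x -> P i l y -> mul x y = mul y x) /\
       exists e, P i l e /\
         (forall x, P i l x -> mul e x = x /\ mul x e = x) /\
         (forall x, P i l x -> exists y, P i l y /\ mul x y = e /\ mul y x = e)).

Definition idempotent (e : A) : Prop := mul e e = e.

End SG.
Arguments cond_star {A}.
Arguments abelian_algebra {A}.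
Arguments subsemigroup {A}.
Arguments inflation_of {A}.
Arguments rect_band_comm_groups {A}.
Arguments idempotent {A}.

Arguments TVar {A}.
Arguments TConst {A}.
Arguments TMul {A}.

(* Main.v *)
Require Import Defs.
From Stdlib Require Import List Arith Lia Classical ClassicalEpsilon ProofIrrelevance.

Section Fwd.
Variable A : Type.
Variable mul : A -> A -> A.
Hypothesis assoc : forall x y z : A, mul x (mul y z) = mul (mul x y) z.
Hypothesis Hab : abelian_algebra mul.
Local Infix "**" := mul (at level 40, left associativity).

Lemma lam_tr u v c d : u ** c = u ** d -> v ** c = v ** d.
Proof.
  intro H. exact (Hab (TMul (TVar 0) (TVar 1)) u v (fun _ => c) (fun _ => d) H).
Qed.

Lemma rho_tr u v c d : c ** u = d ** u -> c ** v = d ** v.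
Proof.
  intro H. exact (Hab (TMul (TVar 1) (TVar 0)) u v (fun _ => c) (fun _ => d) H).
Qed.

Lemma mid e x y : idempotent mul e -> x ** e ** y = x ** y.
Proof.
  intro He. unfold idempotent in He. rewrite <- assoc. apply (lam_tr e x (e ** y) y).
  rewrite assoc. rewrite He. reflexivity.
Qed.

Lemma idem_mul e f : idempotent mul e -> idempotent mul f -> idempotent mul (e ** f).
Proof.
  intros He Hf. unfold idempotent in *. rewrite assoc. rewrite (mid e (e**f) f He).
  rewrite <- assoc. rewrite Hf. reflexivity.
Qed.

Definition Bs x := exists y z, x = y ** z.
Definition Reg := forall s, Bs s -> exists f, idempotent mul f /\ f ** s = s /\ s ** f = s.
Definition Grp := forall f g, idempotent mul f -> f ** g = g -> g ** f = g ->
  exists h, f ** h = h /\ h ** f = h /\ g ** h = f /\ h ** g = f.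

Lemma case1 : (forall b c : A,
     (forall x, (exists a, x = mul (mul b c) a) <-> (exists a, x = mul b a)) /\
     (forall x, (exists a, x = mul (mul a b) c) <-> (exists a, x = mul a c))) -> Reg /\ Grp.
Proof.
  intro H. split.
  - intros s [y [z ->]].
    destruct (H y z) as [H1 H2].
    destruct (proj2 (H1 (y ** z)) (ex_intro _ z eq_refl)) as [a Ha].
    destruct (proj2 (H2 (y ** z)) (ex_intro _ y eq_refl)) as [a' Ha'].
    set (s := y ** z) in *.
    assert (Ha2 : s = a' ** s) by (unfold s; rewrite assoc; exact Ha').
    clearbody s.
    assert (Ea : a ** a = a ** (a ** a)).
    { apply (lam_tr s a a (a ** a)). rewrite assoc. rewrite <- Ha. exact Ha. }
    assert (Ea' : a' ** a' = a' ** a' ** a').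
    { apply (rho_tr s a' a' (a' ** a')). rewrite <- assoc. rewrite <- Ha2. exact Ha2. }
    rewrite assoc in Ea.
    assert (Ie : idempotent mul (a ** a)).
    { unfold idempotent. rewrite assoc. rewrite <- Ea. symmetry. exact Ea. }
    assert (Ie' : idempotent mul (a' ** a')).
    { unfold idempotent. rewrite assoc. rewrite <- Ea'. symmetry. exact Ea'. }
    exists (a' ** a' ** (a ** a)).
    split; [apply idem_mul; assumption|]. split.
    + rewrite (mid (a ** a) (a' ** a') s Ie). rewrite <- assoc, <- Ha2, <- Ha2. reflexivity.
    + rewrite assoc. rewrite (mid (a' ** a') s (a ** a) Ie').
      rewrite assoc, <- Ha, <- Ha. reflexivity.
  - intros f g Hf Hfg Hgf.
    pose proof Hf as Hf'. unfold idempotent in Hf'.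
    destruct (H f g) as [H1 _].
    destruct (proj2 (H1 f) (ex_intro _ f (eq_sym Hf'))) as [a Ha].
    rewrite Hfg in Ha.
    destruct (H g f) as [_ H2].
    destruct (proj2 (H2 f) (ex_intro _ f (eq_sym Hf'))) as [a' Ha'].
    rewrite <- assoc, Hgf in Ha'.
    assert (Hgh : g ** (f ** a ** f) = f).
    { rewrite !assoc. rewrite Hgf. rewrite <- Ha. exact Hf'. }
    assert (Hh2g : f ** a' ** f ** g = f).
    { rewrite <- assoc, Hfg, <- assoc, <- Ha'. exact Hf'. }
    assert (Heq : f ** a ** f = f ** a' ** f).
    { transitivity (f ** a' ** f ** g ** (f ** a ** f)).
      - rewrite Hh2g. rewrite !assoc, Hf'. reflexivity.
      - rewrite <- (assoc (f ** a' ** f) g), Hgh.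
        rewrite <- (assoc (f ** a')), Hf'. reflexivity. }
    exists (f ** a ** f). split; [|split; [|split]].
    + rewrite !assoc, Hf'. reflexivity.
    + rewrite <- assoc, Hf'. reflexivity.
    + exact Hgh.
    + rewrite Heq. exact Hh2g.
Qed.

Fixpoint pw (s : A) (n : nat) : A := match n with 0 => s | S n => pw s n ** s end.

Lemma pw_add s a b : pw s a ** pw s b = pw s (a + b + 1).
Proof.
  induction b as [|b IH]; cbn [pw].
  - replace (a + 0 + 1) with (S a) by lia. reflexivity.
  - rewrite assoc, IH. replace (a + S b + 1) with (S (a + b + 1)) by lia. reflexivity.
Qed.

Fixpoint lst (f : nat -> A) (n : nat) : list A :=
  match n with 0 => nil | S n => f n :: lst f n end.

Lemma lst_in f n x : In x (lst f n) -> exists i, i < n /\ x = f i.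
Proof.
  induction n; simpl; [tauto|]. intros [E|Hx].
  - exists n. split; [lia|auto].
  - destruct (IHn Hx) as [i [Hi E]]. exists i. split; [lia|auto].
Qed.

Lemma lst_len f n : length (lst f n) = n.
Proof. induction n; simpl; auto. Qed.

Lemma php f n : NoDup (lst f n) \/ exists i j, i < j /\ f i = f j.
Proof.
  induction n. - left; constructor.
  - destruct IHn as [H|H]; [|right; exact H].
    destruct (classic (In (f n) (lst f n))) as [Hin|Hn].
    + right. destruct (lst_in _ _ _ Hin) as [i [Hi E]]. exists i, n. split; [exact Hi| symmetry; exact E].
    + left. simpl. constructor; assumption.
Qed.

Lemma fin_idem (l : list A) (Hl : forall x y, In (x ** y) l) s :
  exists m, 1 <= m /\ idempotent mul (pw s m).
Proof.
  destruct (php (fun k => pw s (S k)) (S (length l))) as [H|[i [j [Hij E]]]].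
  - exfalso. assert (Hinc : incl (lst (fun k => pw s (S k)) (S (length l))) l).
    { intros x Hx. destruct (lst_in _ _ _ Hx) as [i [_ ->]]. simpl. apply Hl. }
    pose proof (NoDup_incl_length H Hinc) as HH. rewrite lst_len in HH. lia.
  - assert (Hper : forall t, pw s (S i + t) = pw s (S j + t)).
    { induction t.
      - rewrite !Nat.add_0_r. exact E.
      - replace (S i + S t) with (S (S i + t)) by lia.
        replace (S j + S t) with (S (S j + t)) by lia. cbn [pw]. rewrite IHt. reflexivity. }
    assert (Hq : forall q t, pw s (S i + t) = pw s (S i + t + q * (j - i))).
    { induction q; intro t.
      - rewrite Nat.mul_0_l, Nat.add_0_r. reflexivity.
      - rewrite IHq. rewrite Nat.mul_succ_l. remember (q * (j - i)) as k.
        replace (S i + t + k) with (S i + (t + k)) by lia.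
        replace (S i + t + (k + (j - i))) with (S j + (t + k)) by lia.
        apply Hper. }
    remember (S i * (j - i)) as n.
    assert (Hn : S i <= n) by (subst n; nia).
    exists (2 * n - 1). split; [lia|].
    unfold idempotent. rewrite pw_add.
    pose proof (Hq (2 * S i) (2 * n - 1 - S i)) as HH.
    replace (S i + (2 * n - 1 - S i)) with (2 * n - 1) in HH by lia.
    replace (2 * S i * (j - i)) with (2 * n) in HH by (subst n; lia).
    rewrite HH. f_equal. lia.
Qed.

Lemma pw_in f g : f ** g = g -> g ** f = g -> forall n, f ** pw g n = pw g n /\ pw g n ** f = pw g n.
Proof.
  intros H1 H2 n. induction n as [|n [IH1 IH2]]; cbn [pw]; [auto|].
  split. - rewrite assoc, IH1. reflexivity.
  - rewrite <- assoc, H2. reflexivity.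
Qed.

Lemma case2 (l : list A) (Hl : forall x y, In (x ** y) l) : Reg /\ Grp.
Proof.
  split.
  - intros s [y [z ->]].
    destruct (fin_idem l Hl (y ** z)) as [m [Hm Hf]].
    destruct m as [|m']; [lia|].
    set (f := pw (y ** z) (S m')) in *.
    pose proof Hf as Hf'. unfold idempotent in Hf'.
    exists f. split; [exact Hf|]. split.
    + assert (Hu : y ** (z ** pw (y ** z) m') = f).
      { rewrite assoc. change (y ** z ** pw (y ** z) m') with (pw (y ** z) 0 ** pw (y ** z) m'). rewrite (pw_add (y ** z) 0 m'). unfold f. f_equal. lia. }
      assert (Hc : y ** (z ** pw (y ** z) m') = f ** y ** (z ** pw (y ** z) m')).
      { rewrite <- (assoc f y), Hu. symmetry. exact Hf'. }
      pose proof (rho_tr _ z _ _ Hc) as R. rewrite assoc. symmetry. exact R.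
    + assert (Hu : pw (y ** z) m' ** y ** z = f).
      { rewrite <- assoc. reflexivity. }
      assert (Hc : pw (y ** z) m' ** y ** z = pw (y ** z) m' ** y ** (z ** f)).
      { rewrite assoc, Hu. symmetry. exact Hf'. }
      pose proof (lam_tr _ y _ _ Hc) as R. rewrite <- assoc. symmetry. exact R.
  - intros f g Hf Hfg Hgf.
    pose proof Hf as Hf'. unfold idempotent in Hf'.
    destruct (fin_idem l Hl g) as [m [_ Hm]].
    pose proof Hm as Hm'. unfold idempotent in Hm'.
    assert (Ef : pw g m = f).
    { destruct (pw_in f g Hfg Hgf m) as [P1 P2].
      transitivity (f ** pw g m ** f). { rewrite P1, P2. reflexivity. }
      rewrite (mid (pw g m) f f Hm). exact Hf'. }
    exists (pw g (m + m)).
    destruct (pw_in f g Hfg Hgf (m + m)) as [P1 P2].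
    split; [exact P1|]. split; [exact P2|]. split.
    + change g with (pw g 0) at 1. rewrite pw_add.
      rewrite <- Ef. rewrite <- Hm'. rewrite pw_add. f_equal; lia.
    + change (pw g (m + m) ** g) with (pw g (m + m) ** pw g 0). rewrite pw_add.
      rewrite <- Ef. rewrite <- Hm'. rewrite pw_add. f_equal; lia.
Qed.


Lemma comm_grp (Hgrp : Grp) f g h : idempotent mul f -> f ** g = g -> g ** f = g ->
  f ** h = h -> h ** f = h -> g ** h = h ** g.
Proof.
  intros Hf H1 H2 H3 H4. pose proof Hf as Hf'. unfold idempotent in Hf'.
  destruct (Hgrp f g Hf H1 H2) as [g' [H5 [H6 [H7 H8]]]].
  assert (E : g ** h ** g' = h).
  { pose proof (Hab (TMul (TMul (TVar 1) (TVar 0)) (TVar 2)) f h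
      (fun i => match i with 1 => g | _ => g' end) (fun _ => f)) as HT.
    simpl in HT. rewrite HT.
    - rewrite H3, H4. reflexivity.
    - rewrite H2, H7, Hf', Hf'. reflexivity. }
  transitivity (g ** h ** (g' ** g)).
  - rewrite H8. rewrite <- assoc, H4. reflexivity.
  - rewrite assoc, E. reflexivity.
Qed.

Lemma sig_eq (Q : A -> Prop) (p q : {x | Q x}) : proj1_sig p = proj1_sig q -> p = q.
Proof. destruct p, q; simpl; intros ->. f_equal. apply proof_irrelevance. Qed.

Lemma uniq_bar (Hreg : Reg) b b' : Bs b -> Bs b' -> (forall y, b ** y = b' ** y) ->
  (forall y, y ** b = y ** b') -> b = b'.
Proof.
  intros Hb Hb' E1 E2.
  destruct (Hreg b Hb) as [f1 [_ [F1 _]]].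
  destruct (Hreg b' Hb') as [f2 [_ [_ F2]]].
  assert (X1 : b' = b ** f2) by (rewrite E1; symmetry; exact F2).
  assert (X2 : f1 ** b' = b') by (rewrite X1, assoc, F1; reflexivity).
  rewrite <- E2 in X2. rewrite F1 in X2. exact X2.
Qed.

Lemma fwd_main (Hreg : Reg) (Hgrp : Grp) :
  (exists B : A -> Prop, subsemigroup mul B /\ inflation_of mul B /\ rect_band_comm_groups mul B) /\
  (forall e f, idempotent mul e -> idempotent mul f -> idempotent mul (mul e f)).
Proof.
  split; [|intros; apply idem_mul; assumption].
  assert (BsS : forall x y, Bs (x ** y)) by (intros x y; exists x, y; reflexivity).
  exists Bs. split; [intros x y _ _; apply BsS|].
  split.
  - exists (fun b x => Bs b /\ (forall y, x ** y = b ** y) /\ (forall y, y ** x = y ** b)).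
    split; [intros b x [H _]; exact H|].
    split; [|split].
    + intro x.
      destruct (Hreg (x ** x) (BsS x x)) as [f [Hf [F1 F2]]].
      assert (Hb : (fun b => Bs b /\ (forall y, x ** y = b ** y) /\ (forall y, y ** x = y ** b)) (f ** x ** f)).
      { split; [apply BsS|]. split.
        - intro y. rewrite (mid f (f ** x) y Hf).
          apply (rho_tr x y x (f ** x)). rewrite <- assoc, F1. reflexivity.
        - intro y. rewrite !assoc. rewrite (mid f y x Hf). rewrite <- assoc.
          apply (lam_tr x y x (x ** f)). rewrite assoc, F2. reflexivity. }
      exists (f ** x ** f). split; [apply BsS|]. split; [exact Hb|].
      intros b' Hb' [_ [G1 G2]]. destruct Hb as [Hb0 [K1 K2]].
      apply (uniq_bar Hreg); auto.
      * intro y. rewrite <- G1. auto.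
      * intro y. rewrite <- G2. auto.
    + intros b Hb. split; [exact Hb|]. split; reflexivity.
    + intros a b x y _ _ [_ [Ha _]] [_ [_ Hb]]. rewrite Ha, Hb. reflexivity.
  - destruct (classic (exists e0, idempotent mul e0)) as [[e0 He0] | Hno].
    2:{ assert (Hemp : A -> False).
        { intro a. destruct (Hreg (a ** a) (BsS a a)) as [f [Hf _]]. apply Hno. exists f. exact Hf. }
        exists False, False, (fun _ _ _ => False).
        repeat split; intros; try contradiction.
        all: try (exfalso; match goal with x : A |- _ => exact (Hemp x) end). }
    pose proof He0 as He0'. unfold idempotent in He0'.
    exists {a : A | idempotent mul a /\ a ** e0 = a}, {b : A | idempotent mul b /\ e0 ** b = b}.
    exists (fun i l x => proj1_sig i ** proj1_sig l ** x = x /\ x ** (proj1_sig i ** proj1_sig l) = x).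
    split; [|split; [|split; [|split; [|split]]]].
    + intros i l x [H1 _]. rewrite <- H1. apply BsS.
    + intros x Hx.
      destruct (Hreg x Hx) as [f [Hf [F1 F2]]].
      pose proof Hf as Hf'. unfold idempotent in Hf'.
      assert (Pi : idempotent mul (f ** e0) /\ f ** e0 ** e0 = f ** e0)
        by (split; [apply idem_mul; auto| rewrite <- assoc, He0'; reflexivity]).
      assert (Pl : idempotent mul (e0 ** f) /\ e0 ** (e0 ** f) = e0 ** f)
        by (split; [apply idem_mul; auto| rewrite assoc, He0'; reflexivity]).
      assert (Kf : f ** e0 ** (e0 ** f) = f).
      { rewrite !assoc. rewrite (mid e0 (f ** e0) f He0), (mid e0 f f He0). exact Hf'. }
      exists (exist _ (f ** e0) Pi), (exist _ (e0 ** f) Pl). simpl.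
      rewrite Kf. split; [auto|].
      intros [i' [Hi' Ei']] [l' [Hl' El']] [Q1 Q2]. simpl in Q1, Q2.
      destruct (Hgrp f x Hf F1 F2) as [h [_ [_ [Hxh Hhx]]]].
      assert (Z1 : i' ** l' ** f = f).
      { rewrite <- Hxh. rewrite assoc, Q1. reflexivity. }
      assert (Z2 : f ** (i' ** l') = f).
      { rewrite <- Hhx. rewrite <- assoc, Q2. reflexivity. }
      split; apply sig_eq; simpl.
      * rewrite <- Z1. rewrite (mid f (i' ** l') e0 Hf), (mid l' i' e0 Hl'). symmetry; exact Ei'.
      * rewrite <- Z2. rewrite !assoc. rewrite (mid f e0 i' Hf), (mid i' e0 l' Hi'). symmetry; exact El'.
    + intros [i [Hi Ei]] [l [Hl El]]. simpl. exists (i ** l).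
      pose proof (idem_mul i l Hi Hl) as H. unfold idempotent in H. rewrite H. auto.
    + intros i l x y [X1 X2] [Y1 Y2]. split.
      * rewrite assoc, X1. reflexivity.
      * rewrite <- assoc, Y2. reflexivity.
    + intros [i [Hi Ei]] [j [Hj Ej]] [l [Hl El]] [m [Hm Em]] x y [X1 X2] [Y1 Y2]. simpl in *.
      pose proof Hi as Hi'. pose proof Hm as Hm'. unfold idempotent in Hi', Hm'.
      split.
      * assert (E : i ** m ** x = x).
        { transitivity (i ** m ** (i ** l ** x)). { rewrite X1; reflexivity. }
          rewrite !assoc, (mid m i i Hm), Hi'. exact X1. }
        rewrite assoc, E. reflexivity.
      * assert (E : y ** (i ** m) = y).
        { transitivity (y ** (j ** m) ** (i ** m)). { rewrite Y2; reflexivity. }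
          rewrite !assoc. rewrite (mid i (y ** j ** m) m Hi).
          rewrite <- (assoc (y ** j) m m), Hm', <- assoc. exact Y2. }
        rewrite <- assoc, E. reflexivity.
    + intros [i [Hi Ei]] [l [Hl El]]. simpl.
      pose proof (idem_mul i l Hi Hl) as HF. pose proof HF as HF'. unfold idempotent in HF'.
      split.
      * intros x y [X1 X2] [Y1 Y2]. apply (comm_grp Hgrp (i ** l)); auto.
      * exists (i ** l). split; [rewrite HF'; auto|]. split.
        -- intros x [X1 X2]. auto.
        -- intros x [X1 X2]. destruct (Hgrp (i ** l) x HF X1 X2) as [h [K1 [K2 [K3 K4]]]].
           exists h. auto.
Qed.

End Fwd.


Section Bwd.
Variable A : Type.
Variable mul : A -> A -> A.
Hypothesis assoc : forall x y z : A, mul x (mul y z) = mul (mul x y) z.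
Local Infix "**" := mul (at level 40, left associativity).
Variable B : A -> Prop.
Hypothesis HBs : subsemigroup mul B.
Variable X : A -> A -> Prop.
Hypothesis HX1 : forall b x, X b x -> B b.
Hypothesis HX2 : forall x, exists b, B b /\ X b x /\ (forall b', B b' -> X b' x -> b' = b).
Hypothesis HX3 : forall b, B b -> X b b.
Hypothesis HX4 : forall a b x y, B a -> B b -> X a x -> X b y -> mul x y = mul a b.
Variables (I L : Type) (P : I -> L -> A -> Prop).
Hypothesis HP1 : forall i l x, P i l x -> B x.
Hypothesis HP2 : forall x, B x -> exists i l, P i l x /\ (forall i' l', P i' l' x -> i' = i /\ l' = l).
Hypothesis HP5 : forall i j l m x y, P i l x -> P j m y -> P i m (mul x y).
Hypothesis HP6 : forall i l,
       (forall x y, P i l x -> P i l y -> mul x y = mul y x) /\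
       exists e, P i l e /\
         (forall x, P i l x -> mul e x = x /\ mul x e = x) /\
         (forall x, P i l x -> exists y, P i l y /\ mul x y = e /\ mul y x = e).
Hypothesis Hid : forall e f, idempotent mul e -> idempotent mul f -> idempotent mul (mul e f).

Lemma bar_ex x : exists b, B b /\ X b x.
Proof. destruct (HX2 x) as [b [H1 [H2 _]]]. eauto. Qed.

Lemma prodB x y : B (x ** y).
Proof.
  destruct (bar_ex x) as [a [Ha Xa]]. destruct (bar_ex y) as [b [Hb Xb]].
  rewrite (HX4 a b x y Ha Hb Xa Xb). apply HBs; auto.
Qed.

Lemma blk_uniq i l i' l' x : P i l x -> P i' l' x -> i' = i /\ l' = l.
Proof.
  intros H1 H2. destruct (HP2 x (HP1 _ _ _ H1)) as [i0 [l0 [_ U]]].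
  destruct (U _ _ H1) as [-> ->]. apply U; auto.
Qed.

Lemma idem_B g : idempotent mul g -> B g.
Proof.
  intro Hg. destruct (bar_ex g) as [b [Hb Xb]]. unfold idempotent in Hg.
  rewrite <- Hg. rewrite (HX4 b b g g Hb Hb Xb Xb). apply HBs; auto.
Qed.

Lemma idem_id i l e g : P i l e -> (forall x, P i l x -> e ** x = x /\ x ** e = x) ->
  (forall x, P i l x -> exists y, P i l y /\ x ** y = e /\ y ** x = e) ->
  P i l g -> idempotent mul g -> g = e.
Proof.
  intros Pe Hid1 Hinv Pg Hg. unfold idempotent in Hg.
  destruct (Hinv g Pg) as [h [_ [_ Hhg]]].
  destruct (Hid1 g Pg) as [E1 _].
  rewrite <- E1, <- Hhg, <- assoc, Hg. reflexivity.
Qed.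

Lemma blk_of b : B b -> exists i l, P i l b.
Proof. intro Hb. destruct (HP2 b Hb) as [i [l [H _]]]. eauto. Qed.

Lemma midB a b f : B a -> B b -> idempotent mul f -> a ** f ** b = a ** b.
Proof.
  intros Ha Hb Hf.
  destruct (blk_of a Ha) as [i [l Pa]].
  destruct (blk_of b Hb) as [k [n Pb]].
  destruct (blk_of f (idem_B f Hf)) as [j [m Pf]].
  destruct (HP6 i l) as [_ [e1 [Pe1 [I1 V1]]]].
  destruct (HP6 k n) as [_ [e2 [Pe2 [I2 V2]]]].
  destruct (HP6 i n) as [_ [e3 [Pe3 [I3 V3]]]].
  assert (He1 : idempotent mul e1) by (apply (I1 e1 Pe1)).
  assert (He2 : idempotent mul e2) by (apply (I2 e2 Pe2)).
  assert (Q1 : e1 ** f ** e2 = e3).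
  { pose proof (HP5 i k m n _ _ (HP5 i j l m _ _ Pe1 Pf) Pe2) as Pq.
    assert (Iq: idempotent mul (e1 ** f ** e2)) by (repeat apply Hid; auto).
    apply (idem_id i n e3); auto. }
  assert (Q2 : e1 ** e2 = e3).
  { pose proof (HP5 i k l n _ _ Pe1 Pe2) as Pq.
    assert (Iq: idempotent mul (e1 ** e2)) by (repeat apply Hid; auto).
    apply (idem_id i n e3); auto. }
  destruct (I1 a Pa) as [_ Ha1]. destruct (I2 b Pb) as [Hb2 _].
  transitivity (a ** e1 ** f ** (e2 ** b)). { rewrite Ha1, Hb2. reflexivity. }
  transitivity (a ** e1 ** (e2 ** b)).
  2:{ rewrite Ha1, Hb2. reflexivity. }
  rewrite !assoc. rewrite <- (assoc (a ** e1) f e2), <- (assoc a e1 (f ** e2)), (assoc e1 f e2), Q1.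
  rewrite <- (assoc a e1 e2), Q2. reflexivity.
Qed.

Lemma bmid x y f : idempotent mul f -> x ** f ** y = x ** y.
Proof.
  intro Hf. pose proof (idem_B f Hf) as Bf.
  destruct (bar_ex x) as [a [Ha Xa]]. destruct (bar_ex y) as [b [Hb Xb]].
  rewrite (HX4 a f x f Ha Bf Xa (HX3 f Bf)).
  assert (Baf : B (a ** f)) by (apply HBs; auto).
  rewrite (HX4 (a ** f) b (a ** f) y Baf Hb (HX3 _ Baf) Xb).
  rewrite (HX4 a b x y Ha Hb Xa Xb).
  apply midB; auto.
Qed.

Fixpoint lf (t : sterm A) : sterm A :=
  match t with TMul t1 _ => lf t1 | _ => t end.
Fixpoint rt (t : sterm A) : sterm A :=
  match t with TMul _ t2 => rt t2 | _ => t end.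

Lemma lf_cases t : lf t = TVar 0 \/ forall w w' c, seval A mul (env_cons A w c) (lf t) = seval A mul (env_cons A w' c) (lf t).
Proof.
  induction t as [n|a|t1 IH1 t2 IH2]; simpl.
  - destruct n; [left; reflexivity|right; intros; reflexivity].
  - right; intros; reflexivity.
  - exact IH1.
Qed.

Lemma rt_cases t : rt t = TVar 0 \/ forall w w' c, seval A mul (env_cons A w c) (rt t) = seval A mul (env_cons A w' c) (rt t).
Proof.
  induction t as [n|a|t1 IH1 t2 IH2]; simpl.
  - destruct n; [left; reflexivity|right; intros; reflexivity].
  - right; intros; reflexivity.
  - exact IH2.
Qed.

Definition RowOf i x := exists b l, X b x /\ P i l b.
Definition ColOf l x := exists b i, X b x /\ P i l b.

Lemma bar_uniq b b' x : X b x -> X b' x -> b = b'.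
Proof.
  intros H1 H2. destruct (HX2 x) as [b0 [_ [_ U]]].
  rewrite (U b (HX1 _ _ H1) H1), (U b' (HX1 _ _ H2) H2). reflexivity.
Qed.

Lemma row_det i i' x : RowOf i x -> RowOf i' x -> i = i'.
Proof.
  intros [b [l [Xb Pb]]] [b' [l' [Xb' Pb']]]. rewrite (bar_uniq _ _ _ Xb Xb') in Pb.
  destruct (blk_uniq _ _ _ _ _ Pb' Pb). auto.
Qed.

Lemma col_det l l' x : ColOf l x -> ColOf l' x -> l = l'.
Proof.
  intros [b [i [Xb Pb]]] [b' [i' [Xb' Pb']]]. rewrite (bar_uniq _ _ _ Xb Xb') in Pb.
  destruct (blk_uniq _ _ _ _ _ Pb' Pb). auto.
Qed.

Lemma row_ex x : exists i, RowOf i x.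
Proof.
  destruct (bar_ex x) as [b [Hb Xb]]. destruct (blk_of b Hb) as [i [l Pb]].
  exists i, b, l. auto.
Qed.

Lemma col_ex x : exists l, ColOf l x.
Proof.
  destruct (bar_ex x) as [b [Hb Xb]]. destruct (blk_of b Hb) as [i [l Pb]].
  exists l, b, i. auto.
Qed.

Lemma row_mul i x y : RowOf i x -> RowOf i (x ** y).
Proof.
  intros [a [l [Xa Pa]]]. destruct (bar_ex y) as [b [Hb Xb]].
  destruct (blk_of b Hb) as [j [m Pb]].
  pose proof (prodB x y) as Bxy.
  exists (x ** y), m. split; [apply HX3; auto|].
  rewrite (HX4 a b x y (HP1 _ _ _ Pa) Hb Xa Xb). apply (HP5 i j l m); auto.
Qed.

Lemma col_mul l x y : ColOf l y -> ColOf l (x ** y).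
Proof.
  intros [b [j [Xb Pb]]]. destruct (bar_ex x) as [a [Ha Xa]].
  destruct (blk_of a Ha) as [i [m Pa]].
  pose proof (prodB x y) as Bxy.
  exists (x ** y), i. split; [apply HX3; auto|].
  rewrite (HX4 a b x y Ha (HP1 _ _ _ Pb) Xa Xb). apply (HP5 i j m l); auto.
Qed.

Lemma row_lf env t i : RowOf i (seval A mul env (lf t)) -> RowOf i (seval A mul env t).
Proof.
  induction t as [n|a|t1 IH1 t2 IH2]; simpl; auto.
  intro H. apply row_mul. auto.
Qed.

Lemma col_rt env t l : ColOf l (seval A mul env (rt t)) -> ColOf l (seval A mul env t).
Proof.
  induction t as [n|a|t1 IH1 t2 IH2]; simpl; auto.
  intro H. apply col_mul. auto.
Qed.


Lemma psi_blk i0 l0 e0 : P i0 l0 e0 -> forall x, P i0 l0 (e0 ** x ** e0).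
Proof.
  intros P0 x.
  destruct (blk_of _ (prodB e0 x)) as [i1 [m1 P1]].
  destruct (blk_of _ (prodB x e0)) as [j [m P2]].
  pose proof (HP5 _ _ _ _ _ _ P1 P0) as Q1.
  pose proof (HP5 _ _ _ _ _ _ P0 P2) as Q2. rewrite assoc in Q2.
  destruct (blk_uniq _ _ _ _ _ Q2 Q1) as [-> _]. exact Q1.
Qed.

Lemma psi_mul e0 : idempotent mul e0 -> forall x y, e0 ** (x ** y) ** e0 = (e0 ** x ** e0) ** (e0 ** y ** e0).
Proof.
  intros He0 x y. pose proof He0 as He0'. unfold idempotent in He0'.
  rewrite !assoc. rewrite <- (assoc (e0 ** x) e0 e0), He0'.
  rewrite (bmid (e0 ** x) y e0 He0). reflexivity.
Qed.

Lemma comm4 i0 l0 p q r s : P i0 l0 p -> P i0 l0 q -> P i0 l0 r -> P i0 l0 s ->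
  (p ** q) ** (r ** s) = (p ** r) ** (q ** s).
Proof.
  intros Pp Pq Pr Ps. destruct (HP6 i0 l0) as [C _].
  rewrite !assoc. rewrite <- (assoc p q r), (C q r Pq Pr), assoc. reflexivity.
Qed.

Lemma key i0 l0 e0 (P0 : P i0 l0 e0) (He0 : idempotent mul e0) :
  forall t u v c d,
  (e0 ** seval A mul (env_cons A u c) t ** e0) ** (e0 ** seval A mul (env_cons A v d) t ** e0) =
  (e0 ** seval A mul (env_cons A u d) t ** e0) ** (e0 ** seval A mul (env_cons A v c) t ** e0).
Proof.
  destruct (HP6 i0 l0) as [C _].
  induction t as [n|a|t1 IH1 t2 IH2]; intros u v c d; simpl.
  - destruct n; simpl; [reflexivity|]. apply C; apply psi_blk; auto.
  - reflexivity.
  - rewrite !(psi_mul e0 He0).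
    rewrite (comm4 i0 l0); try apply psi_blk; auto.
    rewrite IH1, IH2.
    rewrite (comm4 i0 l0); try apply psi_blk; auto.
Qed.

Lemma cancel0 i0 l0 a p q : P i0 l0 a -> P i0 l0 p -> P i0 l0 q -> a ** p = a ** q -> p = q.
Proof.
  intros Pa Pp Pq E. destruct (HP6 i0 l0) as [_ [e [Pe [Id V]]]].
  destruct (V a Pa) as [h [_ [_ Hha]]].
  destruct (Id p Pp) as [Ep _]. destruct (Id q Pq) as [Eq _].
  rewrite <- Ep, <- Eq, <- Hha, <- !assoc, E. reflexivity.
Qed.

Lemma recon i l e e0 p : (forall x, P i l x -> e ** x = x /\ x ** e = x) -> P i l p ->
  idempotent mul e0 -> e ** (e0 ** p ** e0) ** e = p.
Proof.
  intros Id Pp He0. destruct (Id p Pp) as [E1 E2].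
  rewrite !assoc. rewrite (bmid e p e0 He0), (bmid (e ** p) e e0 He0), E1, E2. reflexivity.
Qed.

Local Notation ev w cc s := (seval A mul (env_cons A w cc) s).

Lemma tc : abelian_algebra mul.
Proof.
  intros t u v c d H.
  destruct t as [n|a|t1 t2].
  { destruct n; simpl in *; auto. }
  { reflexivity. }
  set (t := TMul t1 t2) in *.
  assert (Bt : forall w cc, B (ev w cc t)).
  { intros w cc. unfold t. simpl. apply prodB. }
  destruct (blk_of _ (prodB u u)) as [i0 [l0 P0]].
  destruct (HP6 i0 l0) as [_ [e0 [Pe0 [Id0 _]]]].
  assert (He0 : idempotent mul e0) by (apply (Id0 e0 Pe0)).
  pose proof (key i0 l0 e0 Pe0 He0 t u v c d) as K.
  rewrite H in K.
  apply (cancel0 i0 l0) in K; try apply psi_blk; auto.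
  destruct (row_ex (ev v c (lf t))) as [i1 R1].
  destruct (row_ex (ev v d (lf t))) as [i2 R2].
  assert (Ei : i1 = i2).
  { destruct (lf_cases t) as [E|Ind].
    - rewrite E in R1, R2. simpl in R1, R2. exact (row_det _ _ _ R1 R2).
    - rewrite (Ind v u) in R1, R2.
      apply row_lf in R1. apply row_lf in R2. rewrite H in R1.
      exact (row_det _ _ _ R1 R2). }
  destruct (col_ex (ev v c (rt t))) as [l1 C1].
  destruct (col_ex (ev v d (rt t))) as [l2 C2].
  assert (El : l1 = l2).
  { destruct (rt_cases t) as [E|Ind].
    - rewrite E in C1, C2. simpl in C1, C2. exact (col_det _ _ _ C1 C2).
    - rewrite (Ind v u) in C1, C2.
      apply col_rt in C1. apply col_rt in C2. rewrite H in C1.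
      exact (col_det _ _ _ C1 C2). }
  subst i2 l2.
  apply row_lf in R1. apply row_lf in R2. apply col_rt in C1. apply col_rt in C2.
  assert (Blk : forall w, RowOf i1 w -> ColOf l1 w -> B w -> P i1 l1 w).
  { intros w Rw Cw Bw. destruct (blk_of w Bw) as [ip [lp Pw]].
    assert (ip = i1) as -> by (apply (row_det ip i1 w); auto; exists w, lp; split; auto).
    assert (lp = l1) as -> by (apply (col_det lp l1 w); auto; exists w, i1; split; auto).
    exact Pw. }
  pose proof (Blk _ R1 C1 (Bt v c)) as Pp.
  pose proof (Blk _ R2 C2 (Bt v d)) as Pq.
  destruct (HP6 i1 l1) as [_ [e [Pe [Id _]]]].
  rewrite <- (recon i1 l1 e e0 (ev v c t) Id Pp He0), <- (recon i1 l1 e e0 (ev v d t) Id Pq He0).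
  rewrite K. reflexivity.
Qed.

End Bwd.

Theorem mainTheorem15 (A : Type) (mul : A -> A -> A)
  (assoc : forall x y z : A, mul x (mul y z) = mul (mul x y) z)
  (Hstar : cond_star mul) :
  abelian_algebra mul <->
  ((exists B : A -> Prop,
      subsemigroup mul B /\ inflation_of mul B /\ rect_band_comm_groups mul B) /\
   (forall e f : A, idempotent mul e -> idempotent mul f ->
      idempotent mul (mul e f))).
Proof.
  split.
  - intro Hab. destruct Hstar as [H1 | [l Hl]].
    + destruct (case1 A mul assoc Hab H1) as [R G]. exact (fwd_main A mul assoc Hab R G).
    + destruct (case2 A mul assoc Hab l Hl) as [R G]. exact (fwd_main A mul assoc Hab R G).
  - intros [[B [HBs [[X [HX1 [HX2 [HX3 HX4]]]] [I [L [P [HP1 [HP2 [HP3 [HP4 [HP5 HP6]]]]]]]]]]] Hid].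
    exact (tc A mul assoc B HBs X HX1 HX2 HX3 HX4 I L P HP1 HP2 HP5 HP6 Hid).
Qed.
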